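(* Let $C\in\mathbb{R}^{n\times n}$ be symmetric and $\rho>0$. A pair $(\tilde\sigma,\sigma)\in\mathbb{R}^{n\times r}\times\mathbb{R}^{n\times r}$ is a critical point of $G_\rho$ if and only if $\sigma=\tilde\sigma$ and $\tilde\sigma$ is a critical point of the problem $\min\{\langle C,\sigma\sigma^\top\rangle:\sigma\in\mathcal{M}\}$; in this sense the two problems have the same critical points.
   Context: $\langle A,B\rangle=\mathrm{Tr}(A^\top B)$, $\|\cdot\|_F$ Frobenius norm. For $\sigma\in\mathbb{R}^{n\times r}$, $\sigma_i$ is its $i$-th row; $\mathcal{M}=\{\sigma:\|\sigma_i\|=1\ \forall i\}$, $\mathcal{I}_S$ the indicator function of $S$. $G_\rho(\tilde\sigma,\sigma)=\langle C,\tilde\sigma\tilde\sigma^\top\rangle+\frac\rho2\|\tilde\sigma-\sigma\|_F^2+\sum_{i=1}^n\mathcal{I}_{\{\|u\|=1\}}(\tilde\sigma_i)$. A critical point of a function is a point where $0$ belongs to its limiting subdifferential; a critical point of the constrained problem is $\tilde\sigma\in\mathcal{M}$ with $0\in2C\tilde\sigma+\partial\big(\sum_i\mathcal{I}_{\{\|u\|=1\}}(\tilde\sigma_i)\big)$. *)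

(* Defs.v *)
From HB Require Import structures.
From mathcomp Require Import all_boot all_order all_algebra.
From mathcomp Require Import reals constructive_ereal.
Set Implicit Arguments. Unset Strict Implicit. Unset Printing Implicit Defensive.
Import Order.TTheory GRing.Theory Num.Theory.
Local Open Scope ring_scope.

Definition enorm (R : realType) (E : zmodType) (ip : E -> E -> R) (x : E) : R :=
  Num.sqrt (ip x x).

Definition ecvg (R : realType) (E : zmodType) (ip : E -> E -> R)
    (u : nat -> E) (x : E) : Prop :=
  forall eps : R, 0 < eps -> exists N : nat, forall k : nat, (N <= k)%N ->
    enorm ip (u k - x) < eps.

(* Frechet (regular) subgradient: f(x) finite and
   liminf_{y -> x, y <> x} (f y - f x - <v, y - x>) / ||y - x|| >= 0,
   written in epsilon-delta form. *)
Definition frechet_subgrad (R : realType) (E : zmodType) (ip : E -> E -> R)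
    (f : E -> \bar R) (x v : E) : Prop :=
  f x \is a fin_num /\
  forall eps : R, 0 < eps -> exists2 delta : R, 0 < delta &
    forall y : E, enorm ip (y - x) < delta ->
      ((fine (f x) + ip v (y - x) - eps * enorm ip (y - x))%:E <= f y)%E.

Definition limiting_subgrad (R : realType) (E : zmodType) (ip : E -> E -> R)
    (f : E -> \bar R) (x v : E) : Prop :=
  f x \is a fin_num /\
  exists (xk vk : nat -> E),
    [/\ ecvg ip xk x,
        (forall eps : R, 0 < eps -> exists N : nat, forall k : nat, (N <= k)%N ->
           `|fine (f (xk k)) - fine (f x)| < eps),
        (forall k, frechet_subgrad ip f (xk k) (vk k)) &
        ecvg ip vk v].

Definition critical (R : realType) (E : zmodType) (ip : E -> E -> R)
    (f : E -> \bar R) (x : E) : Prop :=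
  limiting_subgrad ip f x 0.

Definition mip (R : realType) (m k : nat) (A B : 'M[R]_(m, k)) : R :=
  \tr (A^T *m B).

Definition frob (R : realType) (m k : nat) (A : 'M[R]_(m, k)) : R :=
  Num.sqrt (mip A A).

Definition pip (R : realType) (n r : nat)
    (p q : 'M[R]_(n, r) * 'M[R]_(n, r)) : R :=
  mip p.1 q.1 + mip p.2 q.2.

Definition indic (R : realType) (T : Type) (S : T -> bool) (x : T) : \bar R :=
  if S x then 0%E else +oo%E.

Definition unit_sphere (R : realType) (r : nat) (u : 'rV[R]_r) : bool :=
  frob u == 1.

Definition row_indic (R : realType) (n r : nat) (s : 'M[R]_(n, r)) : \bar R :=
  (\sum_(i < n) @indic R _ (@unit_sphere R r) (row i s))%E.

Definition in_M (R : realType) (n r : nat) (s : 'M[R]_(n, r)) : Prop :=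
  forall i : 'I_n, frob (row i s) = 1.

Definition G (R : realType) (n r : nat) (C : 'M[R]_n) (rho : R)
    (p : 'M[R]_(n, r) * 'M[R]_(n, r)) : \bar R :=
  ((mip C (p.1 *m p.1^T))%:E + (rho / 2 * frob (p.1 - p.2) ^+ 2)%:E
     + row_indic p.1)%E.

(* critical point of min{<C, s s^T> : s in M}:
   s in M and 0 in 2 C s + d(sum_i I(s_i))(s) *)
Definition constrained_critical (R : realType) (n r : nat) (C : 'M[R]_n)
    (s : 'M[R]_(n, r)) : Prop :=
  in_M s /\
  exists w : 'M[R]_(n, r),
    limiting_subgrad (@mip R n r) (@row_indic R n r) s w /\
    2%:R *: (C *m s) + w = 0.

(* Main.v *)
Require Import Defs.
From HB Require Import structures.
From mathcomp Require Import all_boot all_order all_algebra.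
From mathcomp Require Import reals constructive_ereal.
From mathcomp Require Import ring lra.
Set Implicit Arguments. Unset Strict Implicit. Unset Printing Implicit Defensive.
Import Order.TTheory GRing.Theory Num.Theory.
Local Open Scope ring_scope.

Section M.
Variables (R : realType) (n r : nat).
Implicit Types (x y z : 'M[R]_(n, r)).

Lemma mipE x y : mip x y = \sum_(j < r) \sum_(i < n) x i j * y i j.
Proof. rewrite /mip /mxtrace; apply: eq_bigr => j _; rewrite mxE; apply: eq_bigr => i _; by rewrite mxE. Qed.

Lemma mipDr x y z : mip x (y + z) = mip x y + mip x z.
Proof. by rewrite /mip mulmxDr mxtraceD. Qed.
Lemma mipC x y : mip x y = mip y x.
Proof. by rewrite /mip -mxtrace_tr trmx_mul trmxK. Qed.
Lemma mipDl x y z : mip (y + z) x = mip y x + mip z x.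
Proof. by rewrite mipC mipDr !(mipC x). Qed.
Lemma mipZr (c : R) x y : mip x (c *: y) = c * mip x y.
Proof. by rewrite /mip -scalemxAr mxtraceZ. Qed.
Lemma mipZl (c : R) x y : mip (c *: x) y = c * mip x y.
Proof. by rewrite mipC mipZr mipC. Qed.
Lemma mipNr x y : mip x (- y) = - mip x y.
Proof. by rewrite -scaleN1r mipZr mulN1r. Qed.
Lemma mipNl x y : mip (- x) y = - mip x y.
Proof. by rewrite mipC mipNr mipC. Qed.
Lemma mipBr x y z : mip x (y - z) = mip x y - mip x z.
Proof. by rewrite mipDr mipNr. Qed.
Lemma mipBl x y z : mip (y - z) x = mip y x - mip z x.
Proof. by rewrite mipDl mipNl. Qed.
Lemma mip0r x : mip x 0 = 0.
Proof. by rewrite /mip mulmx0 mxtrace0. Qed.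
Lemma mip0l x : mip 0 x = 0.
Proof. by rewrite mipC mip0r. Qed.

Lemma mip_ge0 x : 0 <= mip x x.
Proof. rewrite mipE; apply: sumr_ge0 => j _; apply: sumr_ge0 => i _; by rewrite -expr2 sqr_ge0. Qed.
Lemma entry_sq x i j : x i j ^+ 2 <= mip x x.
Proof.
rewrite mipE (bigD1 j) //= (bigD1 i) //= -addrA -expr2 lerDl.
apply: addr_ge0; apply: sumr_ge0 => k _; last apply: sumr_ge0 => l _;
  by rewrite -expr2 sqr_ge0.
Qed.

Lemma frob_ge0 x : 0 <= frob x. Proof. exact: sqrtr_ge0. Qed.
Lemma frob_sq x : frob x ^+ 2 = mip x x. Proof. by rewrite sqr_sqrtr // mip_ge0. Qed.

Lemma entry_le x i j : `|x i j| <= frob x.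
Proof. by rewrite -sqrtr_sqr ler_sqrt ?mip_ge0 ?entry_sq. Qed.

Lemma mip0_eq0 x : mip x x <= 0 -> x = 0.
Proof.
move=> h; apply/matrixP => i j; rewrite mxE; apply/eqP.
by rewrite -sqrf_eq0 eq_le sqr_ge0 andbT (le_trans (entry_sq x i j)).
Qed.

Lemma CS x y : `|mip x y| <= frob x * frob y.
Proof.
have hA := mip_ge0 x; have hC := mip_ge0 y.
suff h : mip x y ^+ 2 <= mip x x * mip y y.
  by rewrite /frob -sqrtrM // -sqrtr_sqr ler_sqrt // mulr_ge0.
case: (ltrP 0 (mip y y)) => hc.
  have := mip_ge0 (mip y y *: x - mip x y *: y).
  rewrite mipBl !mipBr !mipZl !mipZr (mipC y x) => h.
  have : 0 <= mip y y * (mip y y * mip x x - mip x y ^+ 2) by lra.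
  by rewrite pmulr_rge0 // subr_ge0 mulrC.
rewrite (mip0_eq0 hc) mip0r expr0n /=. by rewrite mulr_ge0 ?mip_ge0.
Qed.

Lemma frobD x y : frob (x + y) <= frob x + frob y.
Proof.
rewrite {1}/frob -(ger0_norm (addr_ge0 (frob_ge0 x) (frob_ge0 y))) -sqrtr_sqr.
rewrite ler_sqrt ?sqr_ge0 // mipDl !mipDr sqrrD !frob_sq (mipC y x).
have := CS x y; rewrite ler_norml => /andP[_ h]; lra.
Qed.

Lemma frobZ (c : R) x : frob (c *: x) = `|c| * frob x.
Proof.
rewrite /frob mipZl mipZr mulrA sqrtrM; last by rewrite -expr2 sqr_ge0.
by rewrite -expr2 (sqrtr_sqr c).
Qed.

Lemma frobN x : frob (- x) = frob x.
Proof. by rewrite /frob mipNl mipNr opprK. Qed.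

Lemma frob0 : frob (0 : 'M[R]_(n, r)) = 0.
Proof. by rewrite /frob mip0r sqrtr0. Qed.

Lemma frobB x y : frob (x - y) <= frob x + frob y.
Proof. by rewrite -(frobN y) frobD. Qed.

Lemma frob_sym x y : frob (x - y) = frob (y - x).
Proof. by rewrite -frobN opprB. Qed.

Lemma sq_bound x (e : R) : 0 <= e -> (forall i j, `|x i j| <= e) ->
  mip x x <= (r * n)%:R * e ^+ 2.
Proof.
move=> he h; rewrite mipE.
apply: (@le_trans _ _ (\sum_(j < r) \sum_(i < n) e ^+ 2)).
  apply: ler_sum => j _; apply: ler_sum => i _.
  by rewrite -expr2 -real_normK ?num_real // lerXn2r ?nnegrE.
by rewrite !sumr_const !card_ord -mulrnA mulr_natl mulnC.
Qed.

Lemma mipCM (C : 'M[R]_n) x y : mip C (x *m y^T) = mip (C *m y) x.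
Proof. by rewrite /mip mulmxA mxtrace_mulC trmx_mul mulmxA. Qed.

Lemma mipMl (C : 'M[R]_n) x y : mip (C *m x) y = mip x (C^T *m y).
Proof. by rewrite /mip trmx_mul mulmxA. Qed.

Definition Lc (C : 'M[R]_n) := \sum_(i < n) \sum_(j < n) `|C i j|.

Lemma Lc_ge0 C : 0 <= Lc C.
Proof. by apply: sumr_ge0 => i _; apply: sumr_ge0 => j _. Qed.

Lemma opbound (C : 'M[R]_n) x :
  frob (C *m x) <= Num.sqrt (r * n)%:R * Lc C * frob x.
Proof.
have hb : forall i k, `|(C *m x) i k| <= Lc C * frob x.
  move=> i k; rewrite mxE.
  apply: (le_trans (ler_norm_sum _ _ _)).
  apply: (@le_trans _ _ (\sum_(j < n) `|C i j| * frob x)).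
    by apply: ler_sum => j _; rewrite normrM ler_wpM2l ?entry_le.
  rewrite -mulr_suml ler_wpM2r ?frob_ge0 // /Lc [X in _ <= X](bigD1 i) //= lerDl.
  by apply: sumr_ge0 => l _; apply: sumr_ge0.
have := sq_bound (mulr_ge0 (Lc_ge0 C) (frob_ge0 x)) hb.
rewrite /frob -ler_sqrt; last by rewrite mulr_ge0 ?sqr_ge0.
rewrite sqrtrM // sqrtr_sqr ger0_norm; last by rewrite mulr_ge0 ?Lc_ge0 ?sqrtr_ge0.
by rewrite mulrA.
Qed.
End M.

Section P.
Variables (R : realType) (n r : nat) (C : 'M[R]_n) (rho : R).
Hypothesis hC : C^T = C.
Local Notation E := 'M[R]_(n, r).

Lemma ge0_nNy (x : \bar R) : (0 <= x)%E -> x != -oo%E.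
Proof. by case: x. Qed.

Definition Mb (s : E) := [forall i, unit_sphere (row i s)].

Lemma row_indicE (s : E) : row_indic s = if Mb s then 0%E else +oo%E.
Proof.
rewrite /row_indic; case: ifP => h.
  by apply: big1 => i _; rewrite /indic; move/forallP: h => ->.
move: h; rewrite /Mb => /negbT; rewrite negb_forall => /existsP [i hi].
rewrite (bigD1 i) //= /indic (negbTE hi) addye //.
apply: ge0_nNy; apply: sume_ge0 => j _; case: ifP => _ //; exact: leey.
Qed.

Definition hh (p : E * E) := mip C (p.1 *m p.1^T) + rho / 2 * frob (p.1 - p.2) ^+ 2.

Lemma GE p : G C rho p = if Mb p.1 then (hh p)%:E else +oo%E.
Proof.
rewrite /G row_indicE; case: ifP => _; first by rewrite adde0.
by rewrite addey.
Qed.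

Definition pn (p : E * E) := enorm (@pip R n r) p.

Lemma pnE p : pn p = Num.sqrt (mip p.1 p.1 + mip p.2 p.2).
Proof. by []. Qed.

Lemma pn_ge0 p : 0 <= pn p. Proof. exact: sqrtr_ge0. Qed.

Lemma pn1 p : frob p.1 <= pn p.
Proof. by rewrite pnE /frob ler_sqrt ?addr_ge0 ?mip_ge0 // lerDl mip_ge0. Qed.
Lemma pn2 p : frob p.2 <= pn p.
Proof. by rewrite pnE /frob ler_sqrt ?addr_ge0 ?mip_ge0 // lerDr mip_ge0. Qed.
Lemma pn_le p : pn p <= frob p.1 + frob p.2.
Proof.
rewrite pnE -(ger0_norm (addr_ge0 (frob_ge0 p.1) (frob_ge0 p.2))) -sqrtr_sqr.
rewrite ler_sqrt ?sqr_ge0 // sqrrD !frob_sq.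
have := mulr_ge0 (frob_ge0 p.1) (frob_ge0 p.2); lra.
Qed.

Lemma subpE (x y : E * E) : y - x = (y.1 - x.1, y.2 - x.2).
Proof. by []. Qed.

Lemma hh_exp a b da db : hh (a + da, b + db) = hh (a, b)
  + mip (2%:R *: (C *m a) + rho *: (a - b)) da + mip (rho *: (b - a)) db
  + mip (C *m da) da + rho / 2 * mip (da - db) (da - db).
Proof.
rewrite /hh /= !frob_sq !mipCM.
have -> : a + da - (b + db) = (a - b) + (da - db) by rewrite opprD addrACA.
rewrite mulmxDr !mipDl !mipDr (mipMl C da a) hC (mipC da (C *m a)).
rewrite !mipZl ?mipDl ?mipDr ?mipNl ?mipNr.
rewrite ?(mipC b a) ?(mipC da a) ?(mipC db a) ?(mipC da b) ?(mipC db b) ?(mipC db da).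
move: (mip (C *m a) a) (mip (C *m a) da) (mip (C *m da) da) (mip a a) (mip a b) (mip b b) (mip a da) (mip a db) (mip b da) (mip b db) (mip da da) (mip da db) (mip db db) => ? ? ? ? ? ? ? ? ? ? ? ? ?. by field.
Qed.

Lemma FS_indE (x v : E) : frechet_subgrad (@mip R n r) (@row_indic R n r) x v <->
  Mb x /\ (forall eps, 0 < eps -> exists2 delta, 0 < delta &
     forall y, Mb y -> frob (y - x) < delta -> mip v (y - x) <= eps * frob (y - x)).
Proof.
rewrite /frechet_subgrad; split.
  case; rewrite row_indicE; case: ifP => // hx _ h; split => // eps /h [d hd hy].
  exists d => // y my /hy; rewrite row_indicE my /= lee_fin /enorm /frob; lra.
case=> hx h; rewrite row_indicE hx; split => // eps /h [d hd hy].
exists d => // y; rewrite row_indicE; case: ifP => my; last by rewrite leey.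
rewrite /enorm /frob => /(hy _ my). by rewrite lee_fin /= /frob; lra.
Qed.

Lemma FS_GE (x v : E * E) : frechet_subgrad (@pip R n r) (G C rho) x v <->
  Mb x.1 /\ (forall eps, 0 < eps -> exists2 delta, 0 < delta &
     forall y, Mb y.1 -> pn (y - x) < delta ->
       hh x + pip v (y - x) - eps * pn (y - x) <= hh y).
Proof.
rewrite /frechet_subgrad; split.
  case; rewrite GE; case: ifP => // hx _ h; split => // eps /h [d hd hy].
  exists d => // y my /hy; rewrite GE my /= lee_fin /pn; lra.
case=> hx h; rewrite GE hx; split => // eps /h [d hd hy].
exists d => // y; rewrite GE; case: ifP => my; last by rewrite leey.
by rewrite /pn => /(hy _ my); rewrite lee_fin /=.
Qed.

Definition K := Num.sqrt (r * n)%:R * Lc C.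
Lemma K_ge0 : 0 <= K.
Proof. by rewrite mulr_ge0 ?sqrtr_ge0 ?Lc_ge0. Qed.

Lemma quad (d : E) : `|mip (C *m d) d| <= K * frob d ^+ 2.
Proof.
apply: (le_trans (CS _ _)); rewrite expr2 mulrA ler_wpM2r ?frob_ge0 //.
exact: opbound.
Qed.

Lemma min_pos (x y : R) : 0 < x -> 0 < y -> exists2 t, 0 < t & t <= x /\ t <= y.
Proof.
move=> hx hy; exists (Num.min x y); first by rewrite lt_min hx hy.
by rewrite !ge_min !lexx orbT.
Qed.

Lemma FS_exp a b v1 v2 :
  frechet_subgrad (@pip R n r) (G C rho) (a, b) (v1, v2) ->
  Mb a /\ forall eps, 0 < eps -> exists2 d, 0 < d & forall da db, Mb (a + da) ->
    Num.sqrt (mip da da + mip db db) < d ->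
    mip v1 da + mip v2 db - eps * Num.sqrt (mip da da + mip db db) <=
    mip (2%:R *: (C *m a) + rho *: (a - b)) da + mip (rho *: (b - a)) db
    + mip (C *m da) da + rho / 2 * mip (da - db) (da - db).
Proof.
move/FS_GE => [/= ha h]; split => // eps /h [d hd hy]; exists d => // da db hm hl.
have := hy (a + da, b + db) hm.
have e1 : a + da - a = da by rewrite addrAC subrr add0r.
have e2 : b + db - b = db by rewrite addrAC subrr add0r.
rewrite subpE /= e1 e2 hh_exp /pip /pn /enorm /pip /= => H; have := H hl; lra.
Qed.

Hypothesis hr : 0 < rho.

Lemma FS_A a b v1 v2 :
  frechet_subgrad (@pip R n r) (G C rho) (a, b) (v1, v2) ->
  v2 = rho *: (b - a) /\
  frechet_subgrad (@mip R n r) (@row_indic R n r) a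
     (v1 - (2%:R *: (C *m a) + rho *: (a - b))).
Proof.
move/FS_exp => [ha h]; split.
  set z := v2 - rho *: (b - a).
  suff hz : mip z z <= 0 by apply/eqP; rewrite -subr_eq0; apply/eqP; exact: mip0_eq0.
  rewrite leNgt; apply/negP => qpos.
  have fzpos : 0 < frob z by rewrite /frob sqrtr_gt0.
  have [d hd hy] := h (frob z / 4%:R) (divr_gt0 fzpos (ltr0Sn _ _)).
  have [t ht [ht1 ht2]] := min_pos (divr_gt0 hd (mulr_gt0 (ltr0Sn _ 1) fzpos))
                                    (divr_gt0 ltr01 (mulr_gt0 (ltr0Sn _ 1) hr)).
  have := hy 0 (t *: z); rewrite addr0 => /(_ ha).
  have et : Num.sqrt (mip (0 : E) 0 + mip (t *: z) (t *: z)) = t * frob z.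
    by rewrite mip0r add0r -[Num.sqrt _]/(frob (t *: z)) frobZ ger0_norm // ltW.
  rewrite et.
  have htd : t * frob z < d.
    have : t * frob z <= d / (2%:R * frob z) * frob z by rewrite ler_wpM2r ?frob_ge0.
    have -> : d / (2%:R * frob z) * frob z = d / 2%:R.
      by field; rewrite gt_eqF.
    move=> h1; apply: (le_lt_trans h1); rewrite ltr_pdivrMr ?ltr0Sn //; lra.
  move=> /(_ htd).
  rewrite mulmx0 !mip0r ?mip0l sub0r mipNl mipNr opprK !mipZl !mipZr.
  have eq1 : mip v2 z = mip z z + mip (rho *: (b - a)) z by rewrite /z mipBl addrC subrK.
  have eq2 : frob z * frob z = mip z z by rewrite -expr2 frob_sq.
  have hrt : rho * t <= 1 / 2%:R.
    by move: ht2; rewrite ler_pdivlMr ?mulr_gt0 ?ltr0Sn //; lra.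
  rewrite eq1 mipZl => H.
  have H2 : t * mip z z * (3%:R / 4%:R) <= (rho * t) * (t * mip z z) / 2%:R.
    move: H; rewrite -eq2; nra.
  have H3 : (rho * t) * (t * mip z z) <= 1 / 2%:R * (t * mip z z).
    by rewrite ler_wpM2r // mulr_ge0 // ltW.
  have H4 : 0 < t * mip z z by rewrite mulr_gt0.
  lra.
apply/FS_indE; split => // eps he.
have [d hd hy] := h (eps / 2%:R) (divr_gt0 he (ltr0Sn _ _)).
have hK' : 0 <= K + rho / 2%:R by rewrite addr_ge0 ?K_ge0 // divr_ge0 // ltW.
have hpos : 0 < (K + rho / 2%:R) * 2%:R + 1 by lra.
have [dl hdl [hd1 hd2]] := min_pos hd (divr_gt0 he hpos).
exists dl => // y my hfy.
have := hy (y - a) 0; rewrite addrC subrK => /(_ my).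
rewrite mip0r addr0 -[Num.sqrt _]/(frob (y - a)) => /(_ (lt_le_trans hfy hd1)).
rewrite !mip0r subr0 -frob_sq mipBl.
have := quad (y - a); rewrite ler_norml => /andP [_ q].
have fdb : frob (y - a) * ((K + rho / 2%:R) * 2%:R + 1) <= eps.
  by rewrite -ler_pdivlMr // ltW // (lt_le_trans hfy hd2).
have := frob_ge0 (y - a); move: fdb q hK'.
set fd := frob (y - a); set k := K; nra.
Qed.

Lemma FS_B a w :
  frechet_subgrad (@mip R n r) (@row_indic R n r) a w ->
  frechet_subgrad (@pip R n r) (G C rho) (a, a) (2%:R *: (C *m a) + w, 0).
Proof.
move/FS_indE => [ha h]; apply/FS_GE; split => // eps he.
have [d hd hy] := h (eps / 2%:R) (divr_gt0 he (ltr0Sn _ _)).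
have hpos : 0 < K * 2%:R + 1 by have := K_ge0; lra.
have [dl hdl [hd1 hd2]] := min_pos hd (divr_gt0 he hpos).
exists dl => // -[y1 y2] /= my; rewrite subpE /= => hp.
have hfd := pn1 (y1 - a, y2 - a); rewrite /= in hfd.
have := hy y1 my (le_lt_trans hfd (lt_le_trans hp hd1)).
have -> : (y1, y2) = (a + (y1 - a), a + (y2 - a)) by rewrite !(addrC a) !subrK.
rewrite hh_exp subrr scaler0 addr0 mip0l /pip /= mip0l (mipDl (y1 - a)).
have := quad (y1 - a); rewrite ler_norml => /andP [q _].
have fdb : pn (y1 - a, y2 - a) * (K * 2%:R + 1) <= eps.
  by rewrite -ler_pdivlMr // ltW // (lt_le_trans hp hd2).
have := mip_ge0 (y1 - a - (y2 - a)); have := frob_ge0 (y1 - a); have := K_ge0.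
move: fdb q hfd; rewrite -/(pn _).
set p := pn _; set fd := frob (y1 - a); set k := K.
move=> h0 q hfd hk hf hm hw.
have h1 : k * fd ^+ 2 <= k * p ^+ 2 by rewrite ler_wpM2l // lerXn2r // ?nnegrE // (le_trans hf hfd).
have h2 : k * p ^+ 2 * 2%:R <= eps * p.
  have hp0 : 0 <= p := le_trans hf hfd.
  have : p * (k * 2%:R) <= eps by lra.
  move=> h3; rewrite expr2; nra.
have h3 : eps / 2%:R * fd <= eps / 2%:R * p by rewrite ler_wpM2l // divr_ge0 // ltW.
have h4 : 0 <= rho / 2%:R * mip (y1 - a - (y2 - a)) (y1 - a - (y2 - a)).
  by rewrite mulr_ge0 // divr_ge0 // ltW.
move: h4; rewrite mipDl mipDr. lra.
Qed.
End P.

Section Z.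
Variable R : realType.
Definition tozero (f : nat -> R) :=
  forall e, 0 < e -> exists N, forall k, (N <= k)%N -> f k < e.

Lemma tz_le (f g : nat -> R) : (forall k, g k <= f k) -> tozero f -> tozero g.
Proof. move=> h hf e /hf [N hN]; exists N => k /hN; exact: le_lt_trans. Qed.

Lemma tz_comb (f g h : nat -> R) (c1 c2 : R) : 0 <= c1 -> 0 <= c2 ->
  tozero f -> tozero g -> (forall k, h k <= c1 * f k + c2 * g k) -> tozero h.
Proof.
move=> h1 h2 hf hg hh e he.
have hc : 0 < c1 + c2 + 1 by lra.
have he' : 0 < e / (c1 + c2 + 1) by rewrite divr_gt0.
have [N1 hN1] := hf _ he'; have [N2 hN2] := hg _ he'.
exists (maxn N1 N2) => k hk.
have := hN1 k (leq_trans (leq_maxl _ _) hk); have := hN2 k (leq_trans (leq_maxr _ _) hk).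
have := hh k; have : (c1 + c2) * (e / (c1 + c2 + 1)) < e.
  have eq : e / (c1 + c2 + 1) * (c1 + c2 + 1) = e by field; rewrite gt_eqF.
  move: eq he'; set q := e / _; nra.
set q := e / _ => H0 H1 H2 H3.
have : c1 * f k <= c1 * q by rewrite ler_wpM2l // ltW.
have : c2 * g k <= c2 * q by rewrite ler_wpM2l // ltW.
lra.
Qed.

Lemma tz_sq (f : nat -> R) : (forall k, 0 <= f k) -> tozero f -> tozero (fun k => f k ^+ 2).
Proof.
move=> h0 hf e he.
have [t ht [ht1 ht2]] := min_pos he ltr01.
have [N hN] := hf _ ht; exists N => k /hN hk.
have := h0 k; rewrite expr2 => hk0.
have : f k * f k <= f k * t by rewrite ler_wpM2l // ltW.
have : f k * t < t * t by rewrite ltr_pM2r.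
have : t * t <= t * 1 by rewrite ler_wpM2l // ltW.
lra.
Qed.

Lemma tz_const (x : R) : tozero (fun _ => x) -> x <= 0.
Proof.
move=> h; rewrite leNgt; apply/negP => hx.
by have [N /(_ N (leqnn N))] := h x hx; rewrite ltxx.
Qed.
End Z.

Lemma tz_add (R : realType) (f g : nat -> R) : tozero f -> tozero g -> tozero (fun k => f k + g k).
Proof. move=> hf hg; apply: (tz_comb (c1 := 1) (c2 := 1)) hf hg _ => // k; lra. Qed.


Theorem lemma6 (R : realType) (n r : nat) (C : 'M[R]_n) (rho : R) :
  C^T = C -> 0 < rho ->
  forall st s : 'M[R]_(n, r),
    critical (@pip R n r) (G C rho) (st, s) <->
    (s = st /\ constrained_critical C st).
Proof.
move=> hC hr st s; split.
  case=> hfin [xk [vk [hx _ hfs hv]]].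
  have hA : forall k, (vk k).2 = rho *: ((xk k).2 - (xk k).1) /\
     frechet_subgrad (@mip R n r) (@row_indic R n r) (xk k).1
       ((vk k).1 - (2%:R *: (C *m (xk k).1) + rho *: ((xk k).1 - (xk k).2))).
    by move=> k; move: (hfs k); case: (xk k) => a b; case: (vk k) => v1 v2; exact: FS_A.
  have hM : Mb st by move: hfin; rewrite GE /=; case: ifP.
  have tx1 : tozero (fun k => frob ((xk k).1 - st)).
    by apply: (tz_le _ hx) => k; exact: (pn1 (xk k - (st, s))).
  have tx2 : tozero (fun k => frob ((xk k).2 - s)).
    by apply: (tz_le _ hx) => k; exact: (pn2 (xk k - (st, s))).
  have tv1 : tozero (fun k => frob (vk k).1).
    by apply: (tz_le _ hv) => k; have := pn1 (vk k - 0); rewrite subpE /= !subr0.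
  have tv2 : tozero (fun k => frob (vk k).2).
    by apply: (tz_le _ hv) => k; have := pn2 (vk k - 0); rewrite subpE /= !subr0.
  have hss : s = st.
    have h0 : frob (s - st) <= 0.
      apply: tz_const.
      apply: (tz_comb (c1 := 1) (c2 := rho^-1) _ _ (tz_add tx1 tx2) tv2) => //.
        by rewrite invr_ge0 ltW.
      move=> k /=.
      have e1 : s - st = ((xk k).1 - st) - ((xk k).2 - s) + rho^-1 *: (vk k).2.
        rewrite (proj1 (hA k)) scalerA mulVf ?gt_eqF // scale1r.
        by apply/matrixP => i j; rewrite !mxE; ring.
      rewrite e1; apply: (le_trans (frobD _ _)).
      rewrite frobZ ger0_norm; last by rewrite invr_ge0 ltW.
      by rewrite mul1r lerD2r; exact: frobB.
    apply/eqP; rewrite -subr_eq0; apply/eqP; apply: mip0_eq0; rewrite -frob_sq.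
    have := frob_ge0 (s - st); nra.
  have hKo : 0 <= Num.sqrt (r * n)%:R * Lc C by rewrite mulr_ge0 ?sqrtr_ge0 ?Lc_ge0.
  split => //; split.
    by move=> i; apply/eqP; exact: (forallP hM i).
  exists (- (2%:R *: (C *m st))); split; last by rewrite subrr.
  split; first by rewrite row_indicE hM.
  exists (fun k => (xk k).1),
    (fun k => (vk k).1 - (2%:R *: (C *m (xk k).1) + rho *: ((xk k).1 - (xk k).2))).
  split.
  - exact: tx1.
  - move=> e he; exists 0%N => k _.
    have [hMk _] := (FS_indE _ _).1 (proj2 (hA k)).
    by rewrite !row_indicE hMk hM /= subrr normr0.
  - by move=> k; exact: (proj2 (hA k)).
  - apply: (tz_comb (c1 := 1) (c2 := 2%:R * (Num.sqrt (r * n)%:R * Lc C)) _ _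
       (tz_add tv1 tv2) tx1) => //; first by rewrite mulr_ge0.
    move=> k /=.
    have e2 : (vk k).1 - (2%:R *: (C *m (xk k).1) + rho *: ((xk k).1 - (xk k).2))
        - - (2%:R *: (C *m st))
        = (vk k).1 + (vk k).2 - 2%:R *: (C *m ((xk k).1 - st)).
      rewrite (proj1 (hA k)) mulmxBr.
      by apply/matrixP => i j; rewrite !mxE; ring.
    rewrite e2; apply: (le_trans (frobB _ _)).
    rewrite frobZ ger0_norm // mul1r -mulrA.
    apply: lerD; first exact: frobD.
    by rewrite ler_wpM2l // opbound.

case=> -> [hM' [w [[hfin [xk [wk [hx _ hfs hw]]]] hw0]]].
have hM : Mb st by apply/forallP => i; apply/eqP; exact: hM' i.
have hMk : forall k, Mb (xk k) by move=> k; have [] := (FS_indE _ _).1 (hfs k).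
have hKo : 0 <= Num.sqrt (r * n)%:R * Lc C by rewrite mulr_ge0 ?sqrtr_ge0 ?Lc_ge0.
have hx' : tozero (fun k => frob (xk k - st)) by exact: hx.
split; first by rewrite GE /= hM.
exists (fun k => (xk k, xk k)), (fun k => (2%:R *: (C *m xk k) + wk k, 0)).
split.
- apply: (tz_le _ (tz_add hx' hx')) => k.
  exact: (pn_le ((xk k, xk k) - (st, st))).
- suff : tozero (fun k => `|fine (G C rho (xk k, xk k)) - fine (G C rho (st, st))|) by [].
  apply: (tz_comb (c1 := frob (2%:R *: (C *m st))) (c2 := K r C) _ _ hx'
     (@tz_sq _ _ (fun k => frob_ge0 _) hx')) => //; try exact: frob_ge0; try exact: K_ge0.
  move=> k /=; rewrite !GE /= hM hMk /=.
  have -> : (xk k, xk k) = (st + (xk k - st), st + (xk k - st)) by rewrite addrC subrK.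
  rewrite hh_exp // subrr scaler0 addr0 mip0l subrr mip0r mulr0 addr0 addr0.
  rewrite addrAC (addrAC (hh _ _ _)) subrr add0r.
  apply: (le_trans (ler_normD _ _)); apply: lerD; first exact: CS.
  exact: quad.
- by move=> k; exact: FS_B.
- have hw' : w = - (2%:R *: (C *m st)) by apply/eqP; rewrite -addr_eq0 addrC hw0.
  apply: (tz_le (f := fun k => 2%:R * (Num.sqrt (r * n)%:R * Lc C) * frob (xk k - st)
                              + 1 * frob (wk k - w))).
    move=> k; apply: (le_trans (pn_le _)); rewrite subpE /= !subr0 frob0 addr0.
    have -> : 2%:R *: (C *m xk k) + wk k = 2%:R *: (C *m (xk k - st)) + (wk k - w).
      rewrite hw' mulmxBr.
      by apply/matrixP => i j; rewrite !mxE; ring.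
    apply: (le_trans (frobD _ _)); rewrite frobZ ger0_norm // mul1r -mulrA.
    by apply: lerD => //; rewrite ler_wpM2l // opbound.
  apply: (tz_comb _ _ hx' hw (fun k => lexx _)) => //; by rewrite mulr_ge0.
Qed.
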